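(* Let $n,k$ be natural numbers with $2k\le n$, and let $N_{n,k}$ be the reflexive graph on vertex set $\{1,\dots,n\}$ with edge set $\{\{i,j\}:1\le i\le j\le n\}\setminus\{\{1,2\},\{3,4\},\dots,\{2k-1,2k\}\}$. Every proper homomorphic image of $N_{n,k}$ (i.e. every reflexive graph $H$ for which there is a non-injective surjective homomorphism $N_{n,k}\to H$) is isomorphic to $N_{m,l}$ for some $m,l$ with $2l<m$.
   Context: Graphs here are reflexive: a set with a symmetric edge relation having a loop at every vertex. A homomorphism maps edges to edges (and may collapse edges or non-edges to single vertices). The graphs $N_{n,k}$ are called subcomplete; $N_{2k,k}$ are proper subcomplete and $N_{n,k}$ with $2k<n$ are partial subcomplete. *)

(* Defs.v *)
From mathcomp Require Import all_boot.
Set Implicit Arguments. Unset Strict Implicit. Unset Printing Implicit Defensive.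

Definition reflexive_graph (T : finType) (e : rel T) : Prop :=
  reflexive e /\ symmetric e.

Definition is_hom (T U : finType) (e : rel T) (e' : rel U) (f : T -> U) : Prop :=
  forall x y, e x y -> e' (f x) (f y).

Definition is_iso (T U : finType) (e : rel T) (e' : rel U) (f : T -> U) : Prop :=
  bijective f /\ forall x y, e' (f x) (f y) = e x y.

(* The subcomplete graph N_{n,k} on vertex set 'I_n, where vertex i : 'I_n
   stands for i+1 in {1,...,n}.  The missing edges {2t-1,2t} (1 <= t <= k)
   become, 0-based, {2s, 2s+1} for s < k, i.e. distinct vertices i, j with
   i./2 = j./2 < k. *)
Definition N_edge (n k : nat) : rel 'I_n :=
  fun i j => (i == j) || ~~ ((i./2 == j./2) && (i./2 < k)).
Arguments N_edge : clear implicits.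

(* Main.v *)
Require Import Defs.
From mathcomp Require Import all_boot fingroup perm zify.
Set Implicit Arguments. Unset Strict Implicit. Unset Printing Implicit Defensive.

Lemma Nstep m l (i j : 'I_m) :
  N_edge m l.+1 i j = N_edge m l i j && ~~ [&& i != j, i./2 == l & j./2 == l].
Proof.
rewrite /N_edge; case: eqP => //= _.
rewrite ltnS leq_eqVlt.
case: (i./2 =P j./2) => [->|] /=.
  by rewrite andbb negb_or andbC.
by move=> H; apply/esym/negP => /andP[/eqP a /eqP b]; apply: H; rewrite a b.
Qed.

Lemma Nuniv m l (hl : 2 * l <= m) (i : 'I_m) :
  (forall j : 'I_m, N_edge m l i j) -> 2 * l <= i.
Proof.
move=> H; rewrite leqNgt; apply/negP => hi.
have ho := modn2 i.
case hodd : (odd i) ho => /= ho.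
  have hj : i.-1 < m by lia.
  have := H (Ordinal hj); rewrite /N_edge /= -!divn2.
  have -> : (i == Ordinal hj) = false by apply/eqP => /(congr1 val) /=; lia.
  have -> : i %/ 2 == i.-1 %/ 2 by apply/eqP; lia.
  by have -> : i %/ 2 < l by lia.
have hj : i.+1 < m by lia.
have := H (Ordinal hj); rewrite /N_edge /= -!divn2.
have -> : (i == Ordinal hj) = false by apply/eqP => /(congr1 val) /=; lia.
have -> : i %/ 2 == uphalf i by rewrite uphalfE -divn2; apply/eqP; lia.
by have -> : i %/ 2 < l by lia.
Qed.

Lemma big2 m l (x : 'I_m) : 2 * l <= x -> (x./2 < l) = false.
Proof. move=> h; apply/negbTE; rewrite -leqNgt -divn2; lia. Qed.

Lemma Nperm m l (h : 'I_m -> 'I_m) (hinj : injective h)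
  (hfix : forall i : 'I_m, i < 2 * l -> h i = i)
  (hge : forall i : 'I_m, 2 * l <= i -> 2 * l <= h i) i j :
  N_edge m l (h i) (h j) = N_edge m l i j.
Proof.
rewrite /N_edge (inj_eq hinj).
case: (ltnP i (2 * l)) => hi; last by rewrite !big2 ?andbF ?orbT //; apply: hge.
case: (ltnP j (2 * l)) => hj; first by rewrite !hfix.
rewrite (hfix _ hi).
have := hge _ hj; set y := h j => hy.
have F : forall z : 'I_m, 2 * l <= z -> (i./2 == z./2) && (i./2 < l) = false.
  by move=> z hz; apply/negbTE/negP => /andP[/eqP ->]; rewrite big2.
by rewrite !F ?orbT.
Qed.

Lemma half_eq x l : 2 * l <= x -> (x./2 == l) = (x == 2 * l) || (x == (2 * l).+1).
Proof.
move=> h; rewrite -divn2; apply/eqP/orP => [E|[/eqP->|/eqP->]]; last 2 first.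
- lia.
- lia.
case: (x =P 2 * l) => [->|ne]; [left|right; apply/eqP; lia]; by [].
Qed.

Definition atmost1 (T : finType) (e : rel T) :=
  forall u v w, ~~ e u v -> ~~ e u w -> v = w.

Lemma key (T : finType) (N : nat) : forall e : rel T,
  #|[set x : T * T | ~~ e x.1 x.2]| < N -> reflexive e -> symmetric e -> atmost1 e ->
  forall u0, (forall v, e u0 v) ->
  exists l, 2 * l < #|T| /\ exists g : T -> 'I_#|T|, is_iso e (N_edge #|T| l) g.
Proof.
elim: N => [|N IH] e //. move=> hc hr hs hat u0 hu0.
case: (pickP [pred x : T * T | ~~ e x.1 x.2]) => [[a b] /= nab|none]; last first.
  exists 0; split; first by apply/card_gt0P; exists u0.
  exists enum_rank; split; first exact: (Bijective enum_rankK enum_valK).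
  move=> x y; rewrite /N_edge ltn0 andbF orbT.
  by have := none (x, y); rewrite /= => /negbFE ->.
set e' := [rel x y | e x y || ((x == a) && (y == b)) || ((x == b) && (y == a))].
have sub : forall x y, e x y -> e' x y by move=> x y h; rewrite /= h.
have ab : a != b by apply: contraNneq nab => ->; rewrite hr.
have nba : ~~ e b a by rewrite hs.
have hc' : #|[set x : T * T | ~~ e' x.1 x.2]| < N.
  rewrite ltnS in hc; apply: leq_trans _ hc; apply: proper_card; apply/properP; split.
    apply/subsetP => -[x y]; rewrite !inE /=; apply: contra; exact: sub.
  by exists (a, b); rewrite !inE /= ?eqxx ?orbT.
have hr' : reflexive e' by move=> x; rewrite /= hr.
have hs' : symmetric e'.
  move=> x y; rewrite /= hs.
  by case: (e y x) (x == a) (y == b) (x == b) (y == a) => [] [] [] [] [].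
have hat' : atmost1 e'.
  move=> u v w h1 h2; exact: hat (contra (sub u v) h1) (contra (sub u w) h2).
have [l [hl [g [hbij hiso]]]] := IH e' hc' hr' hs' hat' u0 (fun v => sub _ _ (hu0 v)).
have ua : forall v, e' a v.
  move=> v; case: (boolP (e a v)) => h; first by apply: sub.
  by rewrite (hat a v b h nab) /= !eqxx /= orbT.
have ub : forall v, e' b v.
  move=> v; case: (boolP (e b v)) => h; first by apply: sub.
  by rewrite (hat b v a h nba) /= !eqxx !orbT.
have ginj := bij_inj hbij.
case: hbij => ginv gK Kg.
have univ : forall x, (forall v, e' x v) -> 2 * l <= g x.
  move=> x hx; apply: Nuniv; first lia.
  by move=> j; rewrite -(Kg j) hiso; apply: hx.
have ga := univ a ua.
have gb := univ b ub.
have gu := univ u0 (fun v => sub _ _ (hu0 v)).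
have u0a : u0 != a by apply: contraNneq nab => <-; exact: hu0.
have u0b : u0 != b by apply: contraNneq nba => <-; exact: hu0.
have d1 : (g a : nat) <> g b by move/val_inj/ginj/eqP; rewrite (negbTE ab).
have d2 : (g u0 : nat) <> g a by move/val_inj/ginj/eqP; rewrite (negbTE u0a).
have d3 : (g u0 : nat) <> g b by move/val_inj/ginj/eqP; rewrite (negbTE u0b).
have hm : 2 * l.+1 < #|T|.
  have := ltn_ord (g a); have := ltn_ord (g b); have := ltn_ord (g u0); lia.
have hm0 : 2 * l < #|T| by lia.
have hm1 : (2 * l).+1 < #|T| by lia.
pose o0 : 'I_#|T| := Ordinal hm0.
pose o1 : 'I_#|T| := Ordinal hm1.
pose s1 := tperm (g a) o0.
pose c := s1 (g b).
pose s2 := tperm c o1.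
pose h := fun i => s2 (s1 i).
have hinj : injective h by move=> i j /perm_inj /perm_inj.
have s1a : s1 (g a) = o0 by rewrite /s1 tpermL.
have co0 : c != o0 by rewrite /c -s1a (inj_eq perm_inj) (inj_eq ginj) eq_sym.
have o10 : o1 != o0 by apply/eqP => /(congr1 val) /=; lia.
have ha : h (g a) = o0 by rewrite /h s1a /s2 tpermD.
have hb : h (g b) = o1 by rewrite /h -/c /s2 tpermL.
have hfix : forall i : 'I_#|T|, i < 2 * l -> h i = i.
  move=> i hi.
  have i1 : s1 i = i.
    rewrite /s1 tpermD //.
      by apply/eqP => E; move: hi; rewrite -E; lia.
    by apply/eqP => E; move: hi; rewrite -E /=; lia.
  rewrite /h i1 /s2 tpermD //.
    apply/eqP => E; have : s1 (g b) = s1 i by rewrite -/c E i1.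
    by move/perm_inj => E'; move: hi; rewrite -E'; lia.
  by apply/eqP => E; move: hi; rewrite -E /=; lia.
have hge : forall i : 'I_#|T|, 2 * l <= i -> 2 * l <= h i.
  move=> i hi; rewrite leqNgt; apply/negP => lt.
  have := hfix _ lt; move/hinj => E; move: lt; rewrite E; lia.
have hhalf : forall i, ((h i)./2 == l) = (i == g a) || (i == g b).
  move=> i; case: (ltnP i (2 * l)) => hi.
    rewrite hfix //.
    have -> : (i./2 == l) = false by apply/negbTE/negP => /eqP; rewrite -divn2; lia.
    have -> : (i == g a) = false by apply/negbTE/negP => /eqP E; move: hi; rewrite E; lia.
    have -> : (i == g b) = false by apply/negbTE/negP => /eqP E; move: hi; rewrite E; lia.
    by [].
  rewrite half_eq; last exact: hge.
  have -> : ((h i : nat) == 2 * l) = (h i == o0) by [].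
  have -> : ((h i : nat) == (2 * l).+1) = (h i == o1) by [].
  by rewrite -ha -hb !(inj_eq hinj).
exists l.+1; split => //.
exists (fun x => h (g x)); split.
  apply: (@bij_comp _ _ _ h g); first exact: injF_bij hinj.
  exact: Bijective gK Kg.
move=> x y; rewrite Nstep Nperm // hiso !hhalf (inj_eq hinj) !(inj_eq ginj) /=.
case exy: (e x y) => /=.
  apply/negP => /and3P[nxy /orP[/eqP xa|/eqP xb] /orP[/eqP ya|/eqP yb]]; subst.
  - by rewrite eqxx in nxy.
  - by rewrite exy in nab.
  - by rewrite exy in nba.
  - by rewrite eqxx in nxy.
apply/negbTE/negP => /andP[/orP[/andP[/eqP xa /eqP yb]|/andP[/eqP xb /eqP ya]]]; subst.
  by rewrite !eqxx ab ?orbT.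
by rewrite !eqxx eq_sym ab ?orbT.
Qed.

Lemma nonedge n k (x y : 'I_n) : ~~ N_edge n k x y ->
  [/\ (x : nat) <> y, x %/ 2 = y %/ 2 & x %/ 2 < k].
Proof.
rewrite /N_edge negb_or negbK => /andP[nxy /andP[/eqP h1 h2]].
split; rewrite ?divn2 //.
by move=> E; apply: (negP nxy); apply/eqP/val_inj.
Qed.

Theorem proposition3p2 (n k : nat) (hnk : 2 * k <= n)
  (T : finType) (e : rel T) (He : reflexive_graph e)
  (f : 'I_n -> T) (Hhom : is_hom (N_edge n k) e f)
  (Hsurj : forall y : T, exists x : 'I_n, f x = y)
  (Hninj : ~ injective f) :
  exists m l : nat, 2 * l < m /\
    exists g : T -> 'I_m, is_iso e (N_edge m l) g.
Proof.
case: He => hr hs.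
have hat : atmost1 e.
  move=> u v w huv huw.
  have [x fx] := Hsurj u; have [y fy] := Hsurj v; have [z fz] := Hsurj w.
  subst.
  have [a1 a2 a3] := nonedge (contra (Hhom x y) huv).
  have [b1 b2 b3] := nonedge (contra (Hhom x z) huw).
  congr f; apply: ord_inj; lia.
have : ~~ injectiveb f by apply/injectiveP.
case/injectivePn => x [y] nxy fxy.
have nxy' : (x : nat) <> y by move=> E; apply: (negP nxy); apply/eqP/val_inj.
have hu0 : forall v, e (f x) v.
  move=> v; have [z <-] := Hsurj v.
  case: (boolP (N_edge n k x z)) => h1; first exact: Hhom.
  case: (boolP (N_edge n k y z)) => h2; first by rewrite fxy; apply: Hhom.
  have [a1 a2 a3] := nonedge h1.
  have [b1 b2 b3] := nonedge h2.
  exfalso; lia.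
have [l [hl [g hg]]] := key (leqnn _) hr hs hat hu0.
by exists #|T|, l; split => //; exists g.
Qed.
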